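(* Let $c\ge 0$ be a fixed constant. For all sufficiently large $n$ the following holds: if $G$ is a $c\log n$-random labeled graph on $n$ nodes, then for every node $i$, every other node is either adjacent to $i$ or adjacent to at least one of the $(c+3)\log n$ smallest-labeled neighbours of $i$.
   Context: $\log$ is the binary logarithm; $C(x\mid y)$ is Kolmogorov complexity with respect to a fixed universal Turing machine. A labeled graph $G$ on $\{1,\dots,n\}$ is encoded by the binary string $E(G)$ of length $n(n-1)/2$ whose $i$-th bit indicates presence of the $i$-th possible edge in lexicographic order. With $\mathcal G$ the set of all labeled graphs on $\{1,\dots,n\}$, $G$ is $\delta(n)$-random if $C(E(G)\mid n,\delta,\mathcal G)\ge n(n-1)/2-\delta(n)$. *)

(* Defs.v *)
From Stdlib Require Import Reals.
From HB Require Import structures.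
From mathcomp Require Import all_boot.

Set Implicit Arguments.
Unset Strict Implicit.
Unset Printing Implicit Defensive.

Definition cpair (a b : nat) : nat := ((a + b) * (a + b).+1)./2 + b.

Inductive code : Type :=
| cZero | cSucc | cId | cFst | cSnd
| cComp of code & code
| cPair of code & code
| cRec  of code & code
| cMu   of code.

Inductive eval : code -> nat -> nat -> Prop :=
| eZero x : eval cZero x 0
| eSucc x : eval cSucc x x.+1
| eId x : eval cId x x
| eFst a b : eval cFst (cpair a b) a
| eSnd a b : eval cSnd (cpair a b) b
| eComp f g x y z : eval g x y -> eval f y z -> eval (cComp f g) x z
| ePair f g x a b : eval f x a -> eval g x b -> eval (cPair f g) x (cpair a b)
| eRec0 f g a y : eval f a y -> eval (cRec f g) (cpair a 0) y
| eRecS f g a n r y : eval (cRec f g) (cpair a n) r ->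
    eval g (cpair a (cpair n r)) y -> eval (cRec f g) (cpair a n.+1) y
| eMu f x n : eval f (cpair x n) 0 ->
    (forall m, m < n -> exists k, eval f (cpair x m) k.+1) ->
    eval (cMu f) x n.

(* Goedel numbering of codes (via MathComp's countType machinery). *)
Fixpoint code_to_tree (c : code) : GenTree.tree nat :=
  match c with
  | cZero => GenTree.Leaf 0
  | cSucc => GenTree.Leaf 1
  | cId => GenTree.Leaf 2
  | cFst => GenTree.Leaf 3
  | cSnd => GenTree.Leaf 4
  | cComp f g => GenTree.Node 0 [:: code_to_tree f; code_to_tree g]
  | cPair f g => GenTree.Node 1 [:: code_to_tree f; code_to_tree g]
  | cRec f g => GenTree.Node 2 [:: code_to_tree f; code_to_tree g]
  | cMu f => GenTree.Node 3 [:: code_to_tree f]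
  end.

Fixpoint tree_to_code (t : GenTree.tree nat) : option code :=
  match t with
  | GenTree.Leaf 0 => Some cZero
  | GenTree.Leaf 1 => Some cSucc
  | GenTree.Leaf 2 => Some cId
  | GenTree.Leaf 3 => Some cFst
  | GenTree.Leaf 4 => Some cSnd
  | GenTree.Leaf _ => None
  | GenTree.Node k ts =>
      match k, ts with
      | 0, [:: t1; t2] =>
          match tree_to_code t1, tree_to_code t2 with
          | Some f, Some g => Some (cComp f g) | _, _ => None end
      | 1, [:: t1; t2] =>
          match tree_to_code t1, tree_to_code t2 with
          | Some f, Some g => Some (cPair f g) | _, _ => None end
      | 2, [:: t1; t2] =>
          match tree_to_code t1, tree_to_code t2 with
          | Some f, Some g => Some (cRec f g) | _, _ => None end
      | 3, [:: t1] =>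
          match tree_to_code t1 with Some f => Some (cMu f) | None => None end
      | _, _ => None
      end
  end.

Lemma code_treeK : pcancel code_to_tree tree_to_code.
Proof. by elim=> //= [f IHf g IHg|f IHf g IHg|f IHf g IHg|f IHf]; rewrite ?IHf ?IHg. Qed.

HB.instance Definition _ := Countable.copy code (pcan_type code_treeK).

(* Bijective base-2 numeration: a bijection between bit strings and nat. *)
Fixpoint b2n (s : seq bool) : nat :=
  match s with
  | [::] => 0
  | b :: s' => (b2n s').*2 + (if b then 2 else 1)
  end.

(* U(p, y) = x  iff  the e-th partial recursive function maps <q, y> to x.
   (Unary self-delimiting prefix makes U additively optimal.)             *)
Definition U (p : seq bool) (y : nat) (x : nat) : Prop :=
  exists e q c, p = nseq e true ++ false :: q /\
    unpickle e = Some c /\ eval c (cpair (b2n q) y) x.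

(* "C(x | y) >= m" for the plain conditional Kolmogorov complexity
   C(x|y) = min { |p| : U(p, y) = x } (unfolded form of the minimum). *)
Definition C_ge (x : seq bool) (y : nat) (m : R) : Prop :=
  forall p, U p y (b2n x) -> Rle m (INR (size p)).

Definition log2 (x : R) : R := Rdiv (ln x) (ln 2).

(* labeled graph on {0,...,n-1} (labels shifted by one) *)
Definition is_graph n (G : rel 'I_n) : Prop :=
  irreflexive G /\ symmetric G.

Definition lexpairs n : seq ('I_n * 'I_n) :=
  flatten [seq [seq (i, j) | j <- [seq j <- enum 'I_n | (nat_of_ord i < nat_of_ord j)%N]]
           | i <- enum 'I_n].

Definition E n (G : rel 'I_n) : seq bool := [seq G p.1 p.2 | p <- lexpairs n].

(* conditional information (n, delta, calG): calG is determined by n, and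
   delta(n) enters the randomness test only through floor(delta(n)). *)
Definition cond (n : nat) (d : R) : nat := cpair n (Z.to_nat (Int_part d)).

Definition random n (G : rel 'I_n) (d : R) : Prop :=
  C_ge (E G) (cond n d) (Rminus (INR (n * (n - 1) %/ 2)) d).

(* h is among the k smallest-labeled neighbours of i (k real: fewer than k
   neighbours of i have a smaller label than h) *)
Definition small_nbr n (G : rel 'I_n) (k : R) (i h : 'I_n) : Prop :=
  G i h /\ Rlt (INR #|[set h' | G i h' & (h' < h)%N]|) k.

(* Main.v *)
Require Import Defs.
From Stdlib Require Import Reals.
From HB Require Import structures.
From mathcomp Require Import all_boot.
From Stdlib Require Import Lia Lra FunctionalExtensionality ZArith Classical.
From mathcomp Require Import all_boot zify.
Set Implicit Arguments.
Unset Strict Implicit.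
Unset Printing Implicit Defensive.

Fixpoint unpair (x : nat) : nat * nat :=
  match x with
  | 0 => (0, 0)
  | x'.+1 => let: (a, b) := unpair x' in
             if a is a'.+1 then (a', b.+1) else (b.+1, 0)
  end.

Definition ustep (p : nat * nat) :=
  let: (a, b) := p in if a is a'.+1 then (a', b.+1) else (b.+1, 0).
Lemma unpairS x : unpair x.+1 = ustep (unpair x).
Proof. by []. Qed.

Lemma cpairS a b : cpair a b.+1 = (cpair a.+1 b).+1.
Proof. by rewrite /cpair addnS addSn addnS. Qed.

Lemma cpairS0 b : cpair b.+1 0 = (cpair 0 b).+1.
Proof.
rewrite /cpair !addn0 add0n -divn2 -divn2.
have -> : b.+1 * b.+2 = b * b.+1 + (b.+1) * 2 by nia.
by rewrite divnDMl // ?addnS ?addn1.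
Qed.

Lemma cpair_unpair x : cpair (unpair x).1 (unpair x).2 = x.
Proof.
elim: x => [|x IH] //=.
case E: (unpair x) => [a b]; rewrite E /= in IH.
case: a E IH => [|a] E IH /=.
  by rewrite cpairS0 IH.
by rewrite cpairS IH.
Qed.

Lemma unpair_cpair a b : unpair (cpair a b) = (a, b).
Proof.
suff H : forall s a b, a + b = s -> unpair (cpair a b) = (a, b) by exact: H.
  elim=> [|s IHs].
    by case=> [|a'] [|b'].
  move=> a0 b0; elim: b0 a0 => [|b1 IHb] a0.
    rewrite addn0 => ->; rewrite cpairS0 unpairS.
    by rewrite (IHs 0 s) ?add0n.
  move=> Hs; rewrite cpairS unpairS (IHb a0.+1) //.
  by rewrite addSn -addnS.
Qed.

Definition p1 x := (unpair x).1.
Definition p2 x := (unpair x).2.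
Lemma p1K a b : p1 (cpair a b) = a. Proof. by rewrite /p1 unpair_cpair. Qed.
Lemma p2K a b : p2 (cpair a b) = b. Proof. by rewrite /p2 unpair_cpair. Qed.
Lemma p12 x : cpair (p1 x) (p2 x) = x. Proof. exact: cpair_unpair. Qed.

Definition comp1 (f : nat -> nat) := exists c, forall x, eval c x (f x).

Lemma comp_ext f g : (forall x, f x = g x) -> comp1 f -> comp1 g.
Proof. by move=> E [c Hc]; exists c => x; rewrite -E. Qed.

Lemma comp_id : comp1 (fun w => w).
Proof. by exists cId => x; apply: eId. Qed.

Lemma comp_zero : comp1 (fun _ => 0).
Proof. by exists cZero => x; apply: eZero. Qed.

Lemma comp_o f g : comp1 f -> comp1 g -> comp1 (fun w => f (g w)).
Proof. by move=> [cf Hf] [cg Hg]; exists (cComp cf cg) => x; apply: eComp (Hg x) (Hf _). Qed.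

Lemma comp_S f : comp1 f -> comp1 (fun w => (f w).+1).
Proof.
move=> Hf; apply: (comp_o (f := S)) Hf.
by exists cSucc => x; apply: eSucc.
Qed.

Lemma comp_p1 f : comp1 f -> comp1 (fun w => p1 (f w)).
Proof.
move=> Hf; apply: (comp_o (f := p1)) Hf.
exists cFst => x; rewrite -{1}(p12 x); exact: eFst.
Qed.

Lemma comp_p2 f : comp1 f -> comp1 (fun w => p2 (f w)).
Proof.
move=> Hf; apply: (comp_o (f := p2)) Hf.
exists cSnd => x; rewrite -{1}(p12 x); exact: eSnd.
Qed.

Lemma comp_pair f g : comp1 f -> comp1 g -> comp1 (fun w => cpair (f w) (g w)).
Proof. by move=> [cf Hf] [cg Hg]; exists (cPair cf cg) => x; apply: ePair. Qed.

Lemma comp_const k : comp1 (fun _ => k).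
Proof. elim: k => [|k IH]; [exact: comp_zero | exact: comp_S IH]. Qed.

Fixpoint primrec (f g : nat -> nat) (a n : nat) : nat :=
  match n with
  | 0 => f a
  | n'.+1 => g (cpair a (cpair n' (primrec f g a n')))
  end.

Lemma comp_primrec f g : comp1 f -> comp1 g ->
  comp1 (fun x => primrec f g (p1 x) (p2 x)).
Proof.
move=> [cf Hf] [cg Hg]; exists (cRec cf cg) => x.
rewrite -{1}(p12 x); elim: (p2 x) => [|n IH] /=.
  exact: eRec0.
exact: eRecS IH (Hg _).
Qed.

Lemma comp_iter (i : nat -> nat) (s : nat -> nat -> nat -> nat) (B : nat -> nat)
  (F : nat -> nat -> nat) :
  (forall w, F w 0 = i w) -> (forall w k, F w k.+1 = s w k (F w k)) ->
  comp1 i -> comp1 (fun u => s (p1 u) (p1 (p2 u)) (p2 (p2 u))) -> comp1 B ->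
  comp1 (fun w => F w (B w)).
Proof.
move=> F0 FS Hi Hs HB.
have H := comp_primrec Hi Hs.
have E : forall a n, primrec i (fun u => s (p1 u) (p1 (p2 u)) (p2 (p2 u))) a n = F a n.
  by move=> a; elim=> [|n IH] /=; rewrite ?F0 // p1K !p2K p1K IH FS.
have := comp_o H (comp_pair comp_id HB).
by apply: comp_ext => w; rewrite p1K p2K E.
Qed.

Lemma comp_add f g : comp1 f -> comp1 g -> comp1 (fun w => f w + g w).
Proof.
move=> Hf Hg.
apply: (@comp_iter f (fun _ _ acc => acc.+1) g (fun w k => f w + k)) => //.
  by move=> w; rewrite addn0.
  by move=> w k; rewrite addnS.
by apply: comp_S; apply: comp_p2; apply: comp_p2; exact: comp_id.
Qed.

Lemma comp_mul f g : comp1 f -> comp1 g -> comp1 (fun w => f w * g w).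
Proof.
move=> Hf Hg.
apply: (@comp_iter (fun _ => 0) (fun w _ acc => acc + f w) g (fun w k => f w * k)).
- by move=> w; rewrite muln0.
- by move=> w k; rewrite mulnS addnC.
- exact: comp_const.
- apply: comp_add; first by apply: comp_p2; apply: comp_p2; exact: comp_id.
  exact: (comp_o Hf (comp_p1 comp_id)).
- exact: Hg.
Qed.

Lemma comp_pred f : comp1 f -> comp1 (fun w => (f w).-1).
Proof.
move=> Hf.
apply: (@comp_iter (fun _ => 0) (fun _ k _ => k) f (fun _ k => k.-1)) => //.
  exact: comp_const.
by apply: comp_p1; apply: comp_p2; exact: comp_id.
Qed.

Lemma comp_sub f g : comp1 f -> comp1 g -> comp1 (fun w => f w - g w).
Proof.
move=> Hf Hg.
apply: (@comp_iter f (fun _ _ acc => acc.-1) g (fun w k => f w - k)).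
- by move=> w; rewrite subn0.
- by move=> w k; rewrite subnS.
- exact: Hf.
- by apply: comp_pred; apply: comp_p2; apply: comp_p2; exact: comp_id.
- exact: Hg.
Qed.

Lemma comp_exp f g : comp1 f -> comp1 g -> comp1 (fun w => f w ^ g w).
Proof.
move=> Hf Hg.
apply: (@comp_iter (fun _ => 1) (fun w _ acc => acc * f w) g (fun w k => f w ^ k)).
- by move=> w; rewrite expn0.
- by move=> w k; rewrite expnS mulnC.
- exact: comp_const.
- apply: comp_mul; first by apply: comp_p2; apply: comp_p2; exact: comp_id.
  exact: (comp_o Hf (comp_p1 comp_id)).
- exact: Hg.
Qed.

Definition compb (P : nat -> bool) := comp1 (fun w => nat_of_bool (P w)).

Lemma comp_nob P : compb P -> comp1 (fun w => nat_of_bool (P w)).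
Proof. by []. Qed.

Lemma compb_leq f g : comp1 f -> comp1 g -> compb (fun w => f w <= g w).
Proof.
move=> Hf Hg; apply: (comp_ext (f := fun w => 1 - (f w - g w))).
  by move=> w; case: leqP => h; lia.
by apply: comp_sub; [exact: comp_const | exact: comp_sub].
Qed.

Lemma compb_ltn f g : comp1 f -> comp1 g -> compb (fun w => f w < g w).
Proof. by move=> Hf Hg; apply: compb_leq => //; apply: comp_S. Qed.

Lemma compb_and P Q : compb P -> compb Q -> compb (fun w => P w && Q w).
Proof.
move=> HP HQ; apply: (comp_ext (f := fun w => nat_of_bool (P w) * nat_of_bool (Q w))).
  by move=> w; case: (P w); case: (Q w).
exact: comp_mul.
Qed.

Lemma compb_neg P : compb P -> compb (fun w => ~~ P w).
Proof.
move=> HP; apply: (comp_ext (f := fun w => 1 - nat_of_bool (P w))).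
  by move=> w; case: (P w).
by apply: comp_sub => //; exact: comp_const.
Qed.

Lemma compb_or P Q : compb P -> compb Q -> compb (fun w => P w || Q w).
Proof.
move=> HP HQ; apply: (comp_ext (f := fun w => nat_of_bool (~~ (~~ P w && ~~ Q w)))).
  by move=> w; case: (P w); case: (Q w).
by apply: compb_neg; apply: compb_and; apply: compb_neg.
Qed.

Lemma compb_eq f g : comp1 f -> comp1 g -> compb (fun w => f w == g w).
Proof.
move=> Hf Hg; apply: (comp_ext (f := fun w => nat_of_bool ((f w <= g w) && (g w <= f w)))).
  by move=> w; rewrite eqn_leq.
by apply: compb_and; apply: compb_leq.
Qed.

Lemma compb_neq f g : comp1 f -> comp1 g -> compb (fun w => f w != g w).
Proof. by move=> Hf Hg; apply: compb_neg; apply: compb_eq. Qed.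

Lemma compb_true : compb (fun _ => true).
Proof. exact: comp_const. Qed.

Lemma comp_if P f g : compb P -> comp1 f -> comp1 g ->
  comp1 (fun w => if P w then f w else g w).
Proof.
move=> HP Hf Hg.
apply: (comp_ext (f := fun w => nat_of_bool (P w) * f w + (1 - nat_of_bool (P w)) * g w)).
  by move=> w; case: (P w); rewrite ?mul1n ?mul0n ?addn0.
apply: comp_add; apply: comp_mul => //; apply: comp_sub => //; exact: comp_const.
Qed.

Lemma compb_odd f : comp1 f -> compb (fun w => odd (f w)).
Proof.
move=> Hf.
apply: (@comp_iter (fun _ => 0) (fun _ _ acc => 1 - acc) f (fun _ k => nat_of_bool (odd k))).
- by [].
- by move=> w k /=; case: (odd k).
- exact: comp_const.
- by apply: comp_sub; [exact: comp_const | apply: comp_p2; apply: comp_p2; exact: comp_id].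
- exact: Hf.
Qed.

Fixpoint bsum (F : nat -> nat) (m : nat) : nat :=
  if m is m'.+1 then bsum F m' + F m' else 0.
Fixpoint ball (P : nat -> bool) (m : nat) : bool :=
  if m is m'.+1 then ball P m' && P m' else true.

Lemma comp_bsum (F : nat -> nat -> nat) B :
  comp1 (fun u => F (p1 u) (p2 u)) -> comp1 B -> comp1 (fun w => bsum (F w) (B w)).
Proof.
move=> HF HB.
apply: (@comp_iter (fun _ => 0) (fun w k acc => acc + F w k) B (fun w k => bsum (F w) k)) => //.
  exact: comp_const.
cbv beta; apply: comp_add; first by apply: comp_p2; apply: comp_p2; exact: comp_id.
have := comp_o HF (comp_pair (comp_p1 comp_id) (comp_p1 (comp_p2 comp_id))).
by apply: comp_ext => u; rewrite p1K p2K.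
Qed.

Lemma compb_ball (P : nat -> nat -> bool) B :
  compb (fun u => P (p1 u) (p2 u)) -> comp1 B -> compb (fun w => ball (P w) (B w)).
Proof.
move=> HP HB.
apply: (@comp_iter (fun _ => 1) (fun w k acc => acc * P w k) B
   (fun w k => nat_of_bool (ball (P w) k))) => //.
- by move=> w k /=; case: (ball _ _); case: (P w k).
- exact: comp_const.
cbv beta; apply: comp_mul; first by apply: comp_p2; apply: comp_p2; exact: comp_id.
have := comp_o HP (comp_pair (comp_p1 comp_id) (comp_p1 (comp_p2 comp_id))).
by apply: comp_ext => u; rewrite p1K p2K.
Qed.

Lemma bsum_lt c x : bsum (fun k => k < c) x = minn c x.
Proof.
elim: x => [|x IH] /=; first by rewrite minn0.
by rewrite IH; case: (ltnP x c) => h /=; lia.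
Qed.

Lemma comp_div f g : comp1 f -> comp1 g -> comp1 (fun w => f w %/ g w).
Proof.
move=> Hf Hg.
apply: (comp_ext (f := fun w => if g w == 0 then 0 else
                     bsum (fun k => nat_of_bool (k.+1 * g w <= f w)) (f w))).
  move=> w; case: eqP => [->|/eqP h]; first by rewrite divn0.
  have -> : bsum (fun k => nat_of_bool (k.+1 * g w <= f w)) (f w)
          = bsum (fun k => nat_of_bool (k < f w %/ g w)) (f w).
    elim: (f w) {1 3}(f w) => [|x IH] y //=.
    by rewrite IH -leq_divRL // lt0n.
  by rewrite bsum_lt; apply/minn_idPl; exact: leq_div.
apply: comp_if; [by apply: compb_eq => //; exact: comp_const | exact: comp_const |].
apply: comp_bsum => //.
apply: comp_nob; apply: compb_leq.
  apply: comp_mul; first by apply: comp_S; apply: comp_p2; exact: comp_id.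
  exact: (comp_o Hg (comp_p1 comp_id)).
exact: (comp_o Hf (comp_p1 comp_id)).
Qed.

Lemma comp_mod f g : comp1 f -> comp1 g -> comp1 (fun w => f w %% g w).
Proof.
move=> Hf Hg; apply: (comp_ext (f := fun w => f w - f w %/ g w * g w)).
  by move=> w; rewrite {1}(divn_eq (f w) (g w)) addKn.
by apply: comp_sub => //; apply: comp_mul => //; apply: comp_div.
Qed.

Ltac cstep :=
  cbv beta;
  match goal with
  | |- compb _ => first [ apply: compb_and | apply: compb_or | apply: compb_neg
                        | apply: compb_leq | apply: compb_eq | apply: compb_odd
                        | apply: compb_ball | exact: comp_const ]
  | |- comp1 (fun _ => nat_of_bool _) => apply: comp_nob
  | |- comp1 (fun _ => if _ then _ else _) => apply: comp_if
  | |- comp1 _ => first [ exact: comp_id | exact: comp_const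
         | apply: comp_p1 | apply: comp_p2 | apply: comp_S | apply: comp_add | apply: comp_sub
         | apply: comp_mul | apply: comp_div | apply: comp_mod | apply: comp_exp | apply: comp_pred
         | apply: comp_bsum ]
  end.
Ltac csolve := repeat cstep.

Definition tri n a := bsum (fun a' => n - a'.+1) a.
Definition ppos n a b := tri n a + (b - a.+1).
Definition spos n a b := if a < b then ppos n a b else ppos n b a.
Definition Lof n := tri n n.
Definition getX L X p := odd ((X - (2 ^ L - 1)) %/ 2 ^ p).
Definition rk n i (get : nat -> bool) h :=
  bsum (fun h' => (h' != i) && get (spos n i h')) h.
Definition Pgen n i j K (get : nat -> bool) :=
  ~~ get (spos n i j) &&
  ball (fun h => (h == i) || ~~ get (spos n i h) || (K <= rk n i get h)
                 || ~~ get (spos n h j)) n.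
Definition validX L X := (2 ^ L - 1 <= X) && (X < 2 ^ L.+1 - 1).
Definition ilog2 n := bsum (fun m => 2 ^ m.+1 <= n) n.

Definition zn z := p1 (p2 z).
Definition zD z := p2 (p2 z).
Definition zi z := p1 z %% zn z.
Definition zj z := p1 z %/ zn z %% zn z.
Definition zr z := p1 z %/ zn z %/ zn z.
Definition zK z := zD z + 3 * ilog2 (zn z).
Definition Pz z X := validX (Lof (zn z)) X &&
   Pgen (zn z) (zi z) (zj z) (zK z) (getX (Lof (zn z)) X).
Definition cnt z m := bsum (fun X => Pz z X) m.
Definition hdec u := (zr (p1 u)).+1 - cnt (p1 u) (p2 u).+1.

Lemma comp_hdec : comp1 hdec.
Proof.
rewrite /hdec /cnt /Pz /Pgen /validX /rk /getX /spos /ppos /Lof /tri /zK /ilog2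
  /zr /zi /zj /zn /zD.
csolve.
Qed.

Lemma comp_mu h : comp1 h -> exists c, forall x n, h (cpair x n) = 0 ->
  (forall m, m < n -> 0 < h (cpair x m)) -> eval c x n.
Proof.
move=> [ch Hh]; exists (cMu ch) => x n H0 Hm.
apply: eMu; first by rewrite -H0; exact: Hh.
move=> m /Hm; case E: (h (cpair x m)) => [|k] // _.
by exists k; rewrite -E.
Qed.

Lemma bsum_mono P m1 m2 : m1 <= m2 -> bsum P m1 <= bsum P m2.
Proof.
move=> H; rewrite -(subnK H); elim: (m2 - m1) => [|d IH]; first by rewrite add0n.
rewrite addSn [bsum _ _.+1]/=; exact: leq_trans IH (leq_addr _ _).
Qed.

Lemma decoder_exists : exists c, forall z X,
  Pz z X -> cnt z X = zr z -> eval c z X.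
Proof.
have [c Hc] := comp_mu comp_hdec.
exists c => z X HP Hr; apply: Hc.
  by rewrite /hdec p1K p2K /cnt /= -/(cnt z X) Hr HP addn1 subnn.
move=> m Hm; rewrite /hdec p1K p2K subn_gt0 ltnS -Hr.
exact: bsum_mono.
Qed.

Fixpoint bin (s : seq bool) : nat := if s is b :: s' then b + (bin s').*2 else 0.

Lemma b2n_bin s : b2n s = (2 ^ size s).-1 + bin s.
Proof.
elim: s => [|b s IH] //=.
rewrite IH expnS; have := expn_gt0 2 (size s); case: (2 ^ size s) => [|e] //= _.
case: b => /=; rewrite -!muln2; lia.
Qed.

Lemma bin_lt s : bin s < 2 ^ size s.
Proof.
elim: s => [|b s IH] //=; rewrite expnS -!muln2; case: b => /=; lia.
Qed.

Lemma bin_bit s p : odd (bin s %/ 2 ^ p) = nth false s p.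
Proof.
elim: s p => [|b s IH] p /=; first by rewrite div0n nth_nil.
case: p => [|p]; first by rewrite expn0 divn1 oddD odd_double; case: b.
rewrite expnS divnMA /= -IH; congr (odd (_ %/ _)).
rewrite -muln2 divnDMl //; case: b => //.
Qed.

Lemma b2n_surj v : exists q, b2n q = v.
Proof.
elim: v {-2}v (leqnn v) => [|m IH] v Hv.
  by exists [::]; move: Hv; rewrite leqn0 => /eqP ->.
case: v Hv => [|v] Hv; first by exists [::].
have Hw : v./2 <= m by rewrite -ltnS; apply: leq_trans Hv; rewrite ltnS -divn2 leq_div.
have [q Hq] := IH _ Hw.
case Ev: (odd v).
  exists (true :: q) => /=; rewrite Hq -[in RHS](odd_double_half v) Ev; lia.
exists (false :: q) => /=; rewrite Hq -[in RHS](odd_double_half v) Ev; lia.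
Qed.

Lemma b2n_size q : 2 ^ size q <= (b2n q).+1.
Proof. rewrite b2n_bin; have := expn_gt0 2 (size q); lia. Qed.

Lemma bits_inj x y : (forall p, odd (x %/ 2 ^ p) = odd (y %/ 2 ^ p)) -> x = y.
Proof.
elim: (x + y) {-2}x {-2}y (leqnn (x + y)) => [|m IH] x' y' Hs H.
  by move: Hs; rewrite leqn0 addn_eq0 => /andP [/eqP -> /eqP ->].
case: (posnP (x' + y')) => Hp.
  by move: Hp => /eqP; rewrite addn_eq0 => /andP [/eqP -> /eqP ->].
have Hh : x'./2 = y'./2.
  apply: IH.
    rewrite -!divn2; lia.
  by move=> p; rewrite -!divn2 -!divnMA -!expnS H.
have := H 0; rewrite expn0 !divn1 => Ho.
by rewrite -(odd_double_half x') -(odd_double_half y') Ho Hh.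
Qed.

Lemma triS n a : tri n a.+1 = tri n a + (n - a.+1).
Proof. by []. Qed.

Lemma tri_mono n a b : a <= b -> tri n a <= tri n b.
Proof. exact: bsum_mono. Qed.

Lemma pos_bounds n a b : a < b -> b < n -> tri n a <= ppos n a b < tri n a.+1.
Proof. move=> h1 h2; rewrite /ppos triS; lia. Qed.

Lemma pos_inj n a b a' b' : a < b -> b < n -> a' < b' -> b' < n ->
  ppos n a b = ppos n a' b' -> a = a' /\ b = b'.
Proof.
move=> h1 h2 h1' h2' E.
have B := pos_bounds h1 h2; have B' := pos_bounds h1' h2'.
case: (ltngtP a a') => Ha.
- have := tri_mono n Ha; lia.
- have := tri_mono n Ha; lia.
- subst a'; split => //; move: E; rewrite /ppos; lia.
Qed.

Lemma spos_sym n a b : spos n a b = spos n b a.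
Proof.
by rewrite /spos; case: (ltngtP a b) => h //; subst.
Qed.

Lemma spos_inj n a b a' b' : a != b -> a' != b' -> a < n -> b < n -> a' < n -> b' < n ->
  spos n a b = spos n a' b' -> (a = a' /\ b = b') \/ (a = b' /\ b = a').
Proof.
move=> hab hab' ha hb ha' hb'.
rewrite /spos; case: (ltngtP a b) => h1; case: (ltngtP a' b') => h2 E;
  try (by move: hab; rewrite h1 eqxx); try (by move: hab'; rewrite h2 eqxx).
- by have [] := pos_inj h1 hb h2 hb' E; lia.
- by have [] := pos_inj h1 hb h2 ha' E; lia.
- by have [] := pos_inj h1 ha h2 hb' E; lia.
- by have [] := pos_inj h1 ha h2 ha' E; lia.
Qed.

Lemma spos_lt n a b : a != b -> a < n -> b < n -> spos n a b < Lof n.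
Proof.
move=> hab ha hb; rewrite /spos /Lof.
case: (ltngtP a b) hab => h //= _.
  have := pos_bounds h hb; have := tri_mono n ha; lia.
have := pos_bounds h ha; have := tri_mono n hb; lia.
Qed.

Lemma tri_closed n m : m <= n -> tri n m * 2 = m * (n.*2 - m.+1).
Proof.
elim: m => [|m IH] h //.
rewrite triS mulnDl IH ?(ltnW h) //.
set a := n - m.+1.
have E1 : n.*2 - m.+1 = m + a * 2 + 1 by rewrite /a -!muln2; lia.
have E2 : n.*2 - m.+2 = m + a * 2 by rewrite /a -!muln2; lia.
rewrite E1 E2; nia.
Qed.

Lemma Lof_eq n : Lof n = n * (n - 1) %/ 2.
Proof.
have h := tri_closed (leqnn n); rewrite /Lof.
have -> : n * (n - 1) = tri n n * 2.
  rewrite h; congr (_ * _); rewrite -muln2; lia.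
by rewrite mulnK.
Qed.

Lemma nth_flatten_take T (x0 : T) (ss : seq (seq T)) a k :
  a < size ss -> k < size (nth [::] ss a) ->
  nth x0 (flatten ss) (sumn (map size (take a ss)) + k) = nth x0 (nth [::] ss a) k.
Proof.
elim: ss a => [|s ss IH] [|a] //= ha hk.
  by rewrite add0n nth_cat hk.
rewrite nth_cat -addnA ltnNge leq_addr /= addKn; exact: IH.
Qed.

Definition blk n (i : 'I_n) := [seq (i, j) | j <- [seq j <- enum 'I_n | (nat_of_ord i < nat_of_ord j)%N]].

Lemma filt_gt n (i : 'I_n) : map val [seq j <- enum 'I_n | (nat_of_ord i < nat_of_ord j)%N] = iota i.+1 (n - i.+1).
Proof.
rewrite -filter_map val_enum_ord.
rewrite (_ : iota 0 n = iota 0 i.+1 ++ iota i.+1 (n - i.+1)); last first.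
  by rewrite -iotaD subnKC.
rewrite filter_cat.
rewrite (eq_in_filter (a2 := pred0)); last first.
  by move=> k; rewrite mem_iota /= => h; apply/negbTE; rewrite -leqNgt; lia.
rewrite filter_pred0 (eq_in_filter (a2 := predT)) ?filter_predT //.
by move=> k; rewrite mem_iota /= => h; lia.
Qed.

Lemma size_blk n (i : 'I_n) : size (blk i) = n - i.+1.
Proof. by rewrite /blk size_map -(size_map val) filt_gt size_iota. Qed.

Lemma sum_blk n a : a <= n -> sumn (map size (take a (map (@blk n) (enum 'I_n)))) = tri n a.
Proof.
move=> ha.
have -> : map size (take a (map (@blk n) (enum 'I_n))) = map (fun k => n - k.+1) (iota 0 a).
  rewrite -map_take -map_comp.
  rewrite (eq_map (g := (fun k => n - k.+1) \o val)); last by move=> i /=; rewrite size_blk.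
  by rewrite map_comp map_take val_enum_ord take_iota (minn_idPl ha).
elim: a ha => [|a IH] ha //.
by rewrite -addn1 iotaD map_cat sumn_cat IH 1?ltnW //= addn0 add0n addn1.
Qed.

Lemma size_lexpairs n : size (lexpairs n) = Lof n.
Proof.
rewrite /lexpairs size_flatten /shape.
have := sum_blk (leqnn n); rewrite take_oversize; last by rewrite size_map size_enum_ord.
move=> h; rewrite /Lof -h; congr sumn.
Qed.

Lemma nth_lexpairs n (a b : 'I_n) x0 : a < b -> nth x0 (lexpairs n) (ppos n a b) = (a, b).
Proof.
move=> hab.
have ha : a < size (map (@blk n) (enum 'I_n)) by rewrite size_map size_enum_ord.
have hk : b - a.+1 < size (nth [::] (map (@blk n) (enum 'I_n)) a).
  rewrite (nth_map a) ?size_enum_ord // nth_ord_enum size_blk; have := ltn_ord b; lia.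
rewrite /ppos -(sum_blk (ltnW (ltn_ord a))).
have -> : lexpairs n = flatten (map (@blk n) (enum 'I_n)) by [].
rewrite nth_flatten_take //.
rewrite (nth_map a) ?size_enum_ord // nth_ord_enum /blk.
have hk' : b - a.+1 < size [seq j <- enum 'I_n | (nat_of_ord a < nat_of_ord j)%N].
  by rewrite -(size_map val) filt_gt size_iota; have := ltn_ord b; lia.
rewrite (nth_map a) //; congr (_, _); apply: val_inj.
rewrite -(nth_map a 0) // filt_gt nth_iota; rewrite /=; have := ltn_ord b; lia.
Qed.

Lemma size_E n (G : rel 'I_n) : size (E G) = Lof n.
Proof. by rewrite size_map size_lexpairs. Qed.

Lemma nth_E n (G : rel 'I_n) (a b : 'I_n) : symmetric G -> a != b ->
  nth false (E G) (spos n a b) = G a b.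
Proof.
move=> Gs hab.
wlog h : a b hab / a < b.
  move=> W; case: (ltngtP a b) => h; first exact: W.
  - by rewrite spos_sym Gs; apply: W => //; rewrite eq_sym.
  - by move: hab; rewrite (val_inj h) eqxx.
rewrite /spos h (nth_map (a, a)) ?nth_lexpairs //.
rewrite size_lexpairs; have := spos_lt hab (ltn_ord a) (ltn_ord b); by rewrite /spos h.
Qed.

Lemma bsum_count (P : nat -> bool) m : bsum P m = count P (iota 0 m).
Proof.
elim: m => [|m IH] //.
have -> : bsum P m.+1 = bsum P m + P m by [].
by rewrite -[m.+1]addn1 iotaD count_cat IH /= addn0.
Qed.

Lemma card_set_ord m (P : nat -> bool) : #|[set x : 'I_m | P x]| = bsum P m.
Proof.
rewrite bsum_count cardsE cardE -deprecated_filter_index_enum size_filter.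
rewrite /index_enum; unlock; rewrite -enumT -val_enum_ord count_map.
by [].
Qed.

Lemma size_filter_enum m (P : nat -> bool) : size [seq h <- enum 'I_m | P (nat_of_ord h)] = bsum P m.
Proof. by rewrite bsum_count size_filter -val_enum_ord count_map. Qed.

Lemma ballP (P : nat -> bool) m : ball P m -> forall h, h < m -> P h.
Proof.
elim: m => [|m IH] //= /andP [H1 H2] h; rewrite ltnS leq_eqVlt => /orP [/eqP -> //|].
exact: IH.
Qed.

Lemma ballI (P : nat -> bool) m : (forall h, h < m -> P h) -> ball P m.
Proof.
elim: m => [|m IH] //= H; rewrite H // andbT; apply: IH => h hm; apply: H; exact: ltnW.
Qed.

Lemma bsum_ext (P Q : nat -> nat) m : (forall h, h < m -> P h = Q h) -> bsum P m = bsum Q m.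
Proof.
elim: m => [|m IH] //= H; rewrite H // IH // => h hm; apply: H; exact: ltnW.
Qed.

Lemma bsum_lt_and (P : nat -> bool) h m : h <= m ->
  bsum (fun k => (k < h) && P k) m = bsum P h.
Proof.
move=> hm; rewrite -(subnKC hm); elim: (m - h) => [|d IH].
  by rewrite addn0; apply: bsum_ext => k hk; rewrite hk.
by rewrite addnS /= IH ltnNge leq_addr /= addn0.
Qed.

Lemma rk_ext n i (g1 g2 : nat -> bool) m :
  (forall h, h < m -> h != i -> g1 (spos n i h) = g2 (spos n i h)) ->
  rk n i g1 m = rk n i g2 m.
Proof.
move=> H; apply: bsum_ext => h hm; case: eqP => [//|/eqP hi] /=; by rewrite H.
Qed.

Lemma rk_ivt n i (g : nat -> bool) m l : l < rk n i g m ->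
  exists h, [/\ h < m, h != i, g (spos n i h) & rk n i g h = l].
Proof.
elim: m => [|m IH] //.
have -> : rk n i g m.+1 = rk n i g m + ((m != i) && g (spos n i m)) by [].
case: (ltnP l (rk n i g m)) => hl.
  by move=> _; have [h [h1 h2 h3 h4]] := IH hl; exists h; split => //; exact: ltnW.
case E: ((m != i) && g (spos n i m)); rewrite /= ?addn0 ?addn1 => h3; first last.
  exfalso; lia.
move: E => /andP [h1 h2]; exists m; split => //; lia.
Qed.

Definition wget K (w : {ffun 'I_K -> bool}) l :=
  if insub l is Some o then w o else false.

Lemma wget_ord K (w : {ffun 'I_K -> bool}) (l : 'I_K) : wget w l = w l.
Proof.
rewrite /wget; case: insubP => [o _ /val_inj -> //|]; by rewrite ltn_ord.
Qed.

Lemma nth_mk L (f : 'I_L -> bool) p (hp : p < L) :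
  nth false [tuple f i | i < L] p = f (Ordinal hp).
Proof. exact: (nth_mktuple f false (Ordinal hp)). Qed.

Lemma tuple_ext L (t1 t2 : L.-tuple bool) :
  (forall p, p < L -> nth false t1 p = nth false t2 p) -> t1 = t2.
Proof.
move=> H; apply: val_inj; apply: (@eq_from_nth _ false); first by rewrite !size_tuple.
by move=> p; rewrite size_tuple; exact: H.
Qed.

Definition forced n (i j : 'I_n) K (t : seq bool) (h : 'I_n) :=
  [&& h != i, h != j, nth false t (spos n i h) & rk n i (nth false t) h < K].

Definition Hi n (i j : 'I_n) K := [set t : (Lof n).-tuple bool |
  Pgen n i j K (nth false t) && (K <= rk n i (nth false t) n)].

Definition PhiH n (i j : 'I_n) K (tw : (Lof n).-tuple bool * {ffun 'I_K -> bool}) :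
  (Lof n).-tuple bool :=
  [tuple (match [pick h : 'I_n | forced i j K tw.1 h && (spos n h j == p)] with
          | Some h => wget tw.2 (rk n i (nth false tw.1) h)
          | None => nth false tw.1 p end) | p < Lof n].

Lemma PhiH_row n (i j : 'I_n) K (tw : (Lof n).-tuple bool * {ffun 'I_K -> bool}) h :
  i != j -> h < n -> h != i ->
  nth false (PhiH i j tw) (spos n i h) = nth false tw.1 (spos n i h).
Proof.
move=> hij hn hi.
have hp : spos n i h < Lof n by apply: spos_lt => //; rewrite eq_sym.
rewrite /PhiH (nth_mk _ hp) /=.
case: pickP => [h' /andP [Hf /eqP E] | //].
move: Hf => /and4P [hi' hj' _ _].
have := spos_inj hj' _ (ltn_ord h') (ltn_ord j) (ltn_ord i) hn E.
rewrite eq_sym hi => /(_ isT) [[/val_inj E1 _]|[_ E2]].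
  by move: hi'; rewrite E1 eqxx.
by move: hij; rewrite (val_inj E2) eqxx.
Qed.

Lemma PhiH_inj n (i j : 'I_n) K : i != j ->
  {in setX (Hi i j K) [set: {ffun 'I_K -> bool}] &, injective (@PhiH n i j K)}.
Proof.
move=> hij [t1 w1] [t2 w2] /setXP [H1 _] /setXP [H2 _] EQ.
move: H1 H2; rewrite !inE => /andP [P1 K1] /andP [P2 K2].
have Hrow : forall h, h < n -> h != i ->
    nth false t1 (spos n i h) = nth false t2 (spos n i h).
  move=> h hn hi.
  have A := PhiH_row (t1, w1) hij hn hi; have B := PhiH_row (t2, w2) hij hn hi.
  rewrite EQ B in A; exact: (esym A).
have Hrk : forall h, h <= n -> rk n i (nth false t1) h = rk n i (nth false t2) h.
  move=> h hh; apply: rk_ext => h' h'h h'i; apply: Hrow => //; exact: leq_trans h'h hh.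
have Hf : forall h : 'I_n, forced i j K t1 h = forced i j K t2 h.
  move=> h; rewrite /forced; case: (boolP (h != i)) => hi //=.
  by rewrite Hrow // Hrk // ltnW.
have F1 : forall t (h : 'I_n), Pgen n i j K (nth false t) -> forced i j K t h ->
    nth false t (spos n h j) = false.
  move=> t h Pt /and4P [hi hj ht hr].
  move: Pt => /andP [_ /ballP /(_ h (ltn_ord h))].
  by rewrite (negbTE (hi : nat_of_ord h != nat_of_ord i)) ht /= leqNgt hr /= => /negbTE.
have Ht : t1 = t2.
  apply: tuple_ext => p hp.
  have := congr1 (fun t : (Lof n).-tuple bool => nth false t p) EQ; rewrite /PhiH !(nth_mk _ hp) /=.
  rewrite (eq_pick (Q := fun h => forced i j K t2 h && (spos n h j == p))); last first.
    by move=> h; rewrite /= Hf.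
  case: pickP => [h /andP [Hfh /eqP Ep] _ | _ //].
  rewrite -Ep F1 // ?F1 //; by rewrite Hf.
subst t2; congr (_, _); apply/ffunP => l.
have hl : l < rk n i (nth false t1) n by apply: leq_trans (ltn_ord l) K1.
have [h [hn hi hrow hrk]] := rk_ivt hl.
have hj : h != j.
  apply/eqP => Ehj; move: P1 => /andP [/negP Hn _]; apply: Hn; by rewrite -Ehj.
set ho := Ordinal hn.
have Hfo : forced i j K t1 ho by rewrite /forced /= hi hj hrow hrk ltn_ord.
have hp : spos n h j < Lof n by apply: spos_lt.
have := congr1 (fun t : (Lof n).-tuple bool => nth false t (spos n h j)) EQ; rewrite /PhiH !(nth_mk _ hp) /=.
case: pickP => [h' /andP [Hf' /eqP Ep] | Hnone]; last by have := Hnone ho; rewrite Hfo eqxx.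
have Eh : h' = ho.
  move: Hf' => /and4P [_ hj' _ _].
  have := spos_inj hj' hj (ltn_ord h') (ltn_ord j) hn (ltn_ord j) Ep.
  case => [[E1 _]|[_ E2]]; first exact: val_inj.
  by move: hj; rewrite E2 eqxx.
by subst h'; rewrite /= hrk !wget_ord.
Qed.

Lemma card_Hi n (i j : 'I_n) K : i != j -> #|Hi i j K| * 2 ^ K <= 2 ^ Lof n.
Proof.
move=> hij; have := card_in_imset (@PhiH_inj n i j K hij).
rewrite cardsX cardsT card_ffun card_bool card_ord => <-.
apply: leq_trans (max_card _) _; by rewrite card_tuple card_bool.
Qed.

Definition nbrs n (i : 'I_n) (t : seq bool) :=
  [seq h <- enum 'I_n | (nat_of_ord h != nat_of_ord i) && nth false t (spos n i h)].

Definition lst n (i : 'I_n) K (t : seq bool) : {ffun 'I_K -> option 'I_n} :=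
  [ffun l : 'I_K => nth None (map Some (nbrs i t)) l].

Definition Lo n (i : 'I_n) K := [set t : (Lof n).-tuple bool | rk n i (nth false t) n < K].

Definition PhiL n (i : 'I_n) K (tw : (Lof n).-tuple bool * {ffun 'I_n -> bool}) :=
  ([tuple (match [pick h : 'I_n | (h != i) && (spos n i h == p)] with
           | Some h => tw.2 h | None => nth false tw.1 p end) | p < Lof n],
   lst i K tw.1, tw.2 i).

Lemma size_nbrs n (i : 'I_n) t : size (nbrs i t) = rk n i (nth false t) n.
Proof. exact: size_filter_enum. Qed.

Lemma mem_nbrs n (i : 'I_n) t (h : 'I_n) :
  (h \in nbrs i t) = (nat_of_ord h != nat_of_ord i) && nth false t (spos n i h).
Proof. by rewrite /nbrs mem_filter mem_enum andbT. Qed.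

Lemma lst_mem n (i : 'I_n) K t (h : 'I_n) : size (nbrs i t) <= K ->
  (Some h \in codom (lst i K t)) = (h \in nbrs i t).
Proof.
move=> hs; apply/codomP/idP.
  move=> [l]; rewrite ffunE.
  case: (ltnP l (size (nbrs i t))) => hl.
    by rewrite (nth_map h) // => [[->]]; exact: mem_nth.
  by rewrite nth_default ?size_map.
move=> hin.
have hl : index h (nbrs i t) < K by apply: leq_trans hs; rewrite index_mem.
exists (Ordinal hl); rewrite ffunE /= (nth_map h) ?index_mem // nth_index //.
Qed.

Lemma PhiL_inj n (i : 'I_n) K :
  {in setX (Lo i K) [set: {ffun 'I_n -> bool}] &, injective (@PhiL n i K)}.
Proof.
move=> [t1 w1] [t2 w2] /setXP [H1 _] /setXP [H2 _] EQ.
move: H1 H2; rewrite !inE => K1 K2.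
have E1 := congr1 (fun x => x.1.1) EQ; have E2 := congr1 (fun x => x.1.2) EQ.
have E3 := congr1 (fun x => x.2) EQ; rewrite /= in E1 E2 E3.
have S1 : size (nbrs i t1) <= K by rewrite size_nbrs ltnW.
have S2 : size (nbrs i t2) <= K by rewrite size_nbrs ltnW.
have Hrow : forall h : 'I_n, h != i ->
    nth false t1 (spos n i h) = nth false t2 (spos n i h).
  move=> h hi.
  have := lst_mem h S1; rewrite E2 (lst_mem h S2) !mem_nbrs.
  by rewrite (hi : nat_of_ord h != nat_of_ord i) /= => ->.
have Ht : t1 = t2.
  apply: tuple_ext => p hp.
  have := congr1 (fun t : (Lof n).-tuple bool => nth false t p) E1; rewrite !(nth_mk _ hp) /=.
  case: pickP => [h /andP [hi /eqP Ep] _ | _ //].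
  by rewrite -Ep Hrow.
subst t2; congr (_, _); apply/ffunP => h.
case: (eqVneq h i) => [->|hi]; first exact: E3.
have hp : spos n i h < Lof n by apply: spos_lt; rewrite // eq_sym.
have := congr1 (fun t : (Lof n).-tuple bool => nth false t (spos n i h)) E1.
rewrite !(nth_mk _ hp) /=.
case: pickP => [h' /andP [hi' /eqP Ep] | Hnone]; last by have := Hnone h; rewrite hi eqxx.
have Eh : h' = h.
  have ih : i != h by rewrite eq_sym.
  have ih' : i != h' by rewrite eq_sym.
  have := spos_inj ih' ih (ltn_ord i) (ltn_ord h') (ltn_ord i) (ltn_ord h) Ep.
  case => [[_ E]|[E _]]; first exact: val_inj.
  by move: ih; rewrite (val_inj E) eqxx.
by subst h'.
Qed.

Lemma card_Lo n (i : 'I_n) K : #|Lo i K| * 2 ^ n <= 2 ^ (Lof n).+1 * n.+1 ^ K.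
Proof.
have := card_in_imset (@PhiL_inj n i K).
rewrite cardsX cardsT card_ffun card_bool card_ord => <-.
apply: leq_trans (max_card _) _.
rewrite !card_prod card_tuple card_ffun card_option !card_bool !card_ord expnS.
by rewrite mulnC mulnA.
Qed.

Definition Pp n i j K X := validX (Lof n) X && Pgen n i j K (getX (Lof n) X).

Lemma getX_b2n s p : getX (size s) (b2n s) p = nth false s p.
Proof.
rewrite /getX b2n_bin subn1 addKn; exact: bin_bit.
Qed.

Lemma valid_b2n s : validX (size s) (b2n s).
Proof.
rewrite /validX b2n_bin subn1 leq_addr /=.
have := bin_lt s; have := expn_gt0 2 (size s); rewrite expnS; lia.
Qed.

Lemma getX_tuple L X p : validX L X ->
  getX L X p = nth false [tuple getX L X q | q < L] p.
Proof.
move=> /andP [h1 h2]; case: (ltnP p L) => hp; first by rewrite (nth_mk _ hp).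
rewrite nth_default ?size_tuple // /getX divn_small //.
apply: leq_trans (leq_pexp2l (isT : 0 < 2) hp).
move: h2; rewrite expnS; have := expn_gt0 2 L; lia.
Qed.

Lemma count_bound n (i j : 'I_n) K m : i != j ->
  bsum (Pp n i j K) m <= #|Hi i j K| + #|Lo i K|.
Proof.
move=> hij; rewrite -card_set_ord.
set S := [set x : 'I_m | Pp n i j K x].
pose f := fun x : 'I_m => [tuple getX (Lof n) x q | q < Lof n].
have finj : {in S &, injective f}.
  move=> x y; rewrite !inE => /andP [vx _] /andP [vy _] E.
  apply: ord_inj.
  have Hb : forall p, getX (Lof n) x p = getX (Lof n) y p.
    by move=> p; rewrite (getX_tuple p vx) (getX_tuple p vy) -/(f x) -/(f y) E.
  have := bits_inj Hb; move: vx vy => /andP [x1 _] /andP [y1 _].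
  lia.
rewrite -(card_in_imset finj).
apply: leq_trans (subset_leq_card (_ : f @: S \subset Hi i j K :|: Lo i K)) _.
  apply/subsetP => t /imsetP [x]; rewrite inE => /andP [vx Px] ->.
  have Hn : nth false (f x) = getX (Lof n) x.
    by apply: functional_extensionality => p; rewrite (getX_tuple p vx).
  rewrite !inE Hn Px /=; case: leqP => //.
by rewrite cardsU leq_subr.
Qed.

Lemma nth_E_row n (G : rel 'I_n) (i h : 'I_n) : is_graph G ->
  G i h = (nat_of_ord h != nat_of_ord i) && nth false (E G) (spos n i h).
Proof.
move=> [Gi Gs]; case: (eqVneq h i) => [->|hi]; first by rewrite Gi eqxx.
by rewrite (hi : nat_of_ord h != nat_of_ord i) /= nth_E // eq_sym.
Qed.

Lemma card_rk n (G : rel 'I_n) (i h : 'I_n) : is_graph G ->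
  #|[set h' | G i h' & (h' < h)%N]| = rk n i (nth false (E G)) h.
Proof.
move=> HG.
have -> : [set h' | G i h' & (h' < h)%N] =
          [set h' : 'I_n | (nat_of_ord h' < h) &&
             ((nat_of_ord h' != nat_of_ord i) && nth false (E G) (spos n i h'))].
  by apply/setP => h'; rewrite !inE (nth_E_row _ _ HG) andbC.
by rewrite (card_set_ord n (fun k => (k < h) && ((k != i) && nth false (E G) (spos n i k)))) bsum_lt_and // ltnW.
Qed.

Lemma Pgen_E n (G : rel 'I_n) (i j : 'I_n) K : is_graph G -> i != j -> G i j = false ->
  (forall h : 'I_n, G i h -> #|[set h' | G i h' & (h' < h)%N]| < K -> G h j = false) ->
  Pgen n i j K (nth false (E G)).
Proof.
move=> HG hij Gij Hbad; have [Gi Gs] := HG.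
rewrite /Pgen nth_E // Gij /=; apply: ballI => h hn.
set ho := Ordinal hn.
case: (eqVneq h i) => [//|hi] /=.
have E1 := nth_E_row i ho HG; rewrite /= hi /= in E1.
rewrite -E1.
case Gih: (G i ho) => //=.
case: leqP => //= hk.
have hj : ho != j by apply/eqP => E2; move: Gij; rewrite -E2 Gih.
have hk' : #|[set h' | G i h' & (h' < ho)%N]| < K by rewrite card_rk.
have := nth_E Gs hj; rewrite /= => ->.
by rewrite (Hbad ho Gih hk').
Qed.

Lemma core (dc : code) (Hdc : forall z X, Pz z X -> cnt z X = zr z -> eval dc z X)
  n (G : rel 'I_n) (i j : 'I_n) D :
  is_graph G -> i != j -> G i j = false ->
  (forall h : 'I_n, G i h -> #|[set h' | G i h' & (h' < h)%N]| < D + 3 * ilog2 n ->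
     G h j = false) ->
  exists q, U (nseq (pickle dc) true ++ false :: q) (cpair n D) (b2n (E G)) /\
     2 ^ size q <= n ^ 2 * (#|Hi i j (D + 3 * ilog2 n)| + #|Lo i (D + 3 * ilog2 n)|).
Proof.
move=> HG hij Gij Hbad.
set K := D + 3 * ilog2 n.
have hL : size (E G) = Lof n by rewrite size_E.
have HP : Pp n i j K (b2n (E G)).
  rewrite /Pp -hL valid_b2n /=.
  have -> : getX (size (E G)) (b2n (E G)) = nth false (E G).
    by apply: functional_extensionality => p; rewrite getX_b2n.
  exact: Pgen_E.
set r := bsum (Pp n i j K) (b2n (E G)).
have Hr : r.+1 <= #|Hi i j K| + #|Lo i K|.
  have := count_bound K (b2n (E G)).+1 hij.
  by rewrite /= -/r HP addn1.
have hn : 0 < n by apply: leq_ltn_trans (ltn_ord i).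
set v := i + n * (j + n * r).
have [q Hq] := b2n_surj v.
exists q; split; last first.
  apply: leq_trans (b2n_size q) _; rewrite Hq.
  apply: leq_trans (_ : n ^ 2 * r.+1 <= _); last by rewrite leq_mul2l Hr orbT.
  have := ltn_ord i; have := ltn_ord j; rewrite /v; nia.
exists (pickle dc), q, dc; split => //; split; first exact: pickleK.
set z := cpair (b2n q) (cpair n D).
have Ezn : zn z = n by rewrite /zn /z p2K p1K.
have Ev : p1 z = v by rewrite /z p1K Hq.
have Ezi : zi z = i by rewrite /zi Ezn Ev /v addnC mulnC modnMDl modn_small.
have Ediv : v %/ n = j + n * r by rewrite /v addnC mulnC divnMDl // divn_small // addn0.
have Ezj : zj z = j by rewrite /zj Ezn Ev Ediv addnC mulnC modnMDl modn_small.
have Ezr : zr z = r by rewrite /zr Ezn Ev Ediv addnC mulnC divnMDl // divn_small // addn0.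
have EzK : zK z = K by rewrite /zK /zD /z p2K p2K Ezn.
apply: Hdc.
  by rewrite /Pz Ezn Ezi Ezj EzK.
by rewrite /cnt /Pz Ezn Ezi Ezj EzK Ezr.
Qed.

Lemma ilog2_tl n : 0 < n -> ilog2 n = trunc_log 2 n.
Proof.
move=> hn; rewrite /ilog2.
rewrite (bsum_ext (Q := fun m => nat_of_bool (m < trunc_log 2 n))); last first.
  move=> m _; congr nat_of_bool; apply/idP/idP => h.
    exact: trunc_log_max.
  apply: leq_trans (trunc_logP (isT : 1 < 2) hn); exact: leq_pexp2l.
rewrite bsum_lt; apply/minn_idPl.
apply: leq_trans (ltnW (ltn_expl _ (isT : 1 < 2))) (trunc_logP (isT : 1 < 2) hn).
Qed.

Lemma ilog2_bounds n : 0 < n -> 2 ^ ilog2 n <= n < 2 ^ (ilog2 n).+1.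
Proof.
move=> hn; rewrite ilog2_tl //.
by rewrite trunc_logP // trunc_log_ltn.
Qed.

Lemma exp_mono_base m1 m2 k : m1 <= m2 -> m1 ^ k <= m2 ^ k.
Proof. by move=> h; elim: k => [|k IH] //; rewrite !expnS leq_mul. Qed.

Lemma cube_le t : 12 <= t -> t.+1 ^ 3 <= 2 ^ t.
Proof.
elim: t => [|t IH] //; rewrite leq_eqVlt => /orP [/eqP <- //| ht].
have h := IH ht.
rewrite [2 ^ _.+1]expnS.
apply: leq_trans (_ : 2 * t.+1 ^ 3 <= _); last by rewrite leq_mul2l h orbT.
have E3 : forall x, x ^ 3 = x * x * x by move=> x; rewrite !expnS expn0 muln1 mulnA.
rewrite !E3; nia.
Qed.

Lemma pow_poly a : exists T, forall t, T <= t -> a * t.+1 ^ 2 <= 2 ^ t.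
Proof.
exists (maxn 12 a) => t; rewrite geq_max => /andP [h12 ha].
apply: leq_trans (cube_le h12).
by rewrite (expnS _ 2) leq_mul2r; apply/orP; right; lia.
Qed.

Lemma numeric e C0 : exists N, forall n D H Lo L, N <= n ->
  D <= C0 * (ilog2 n).+1 ->
  H * 2 ^ (D + 3 * ilog2 n) <= 2 ^ L ->
  Lo * 2 ^ n <= 2 ^ L.+1 * n.+1 ^ (D + 3 * ilog2 n) ->
  n ^ 2 * (H + Lo) * 2 ^ (e + D + 2) <= 2 ^ L.
Proof.
have [T HT] := pow_poly (2 * C0 + e + 9).
exists (2 ^ (maxn T (e + 5))) => n D H Lo L hN hD hH hLo.
have hn : 0 < n by apply: leq_trans hN; exact: expn_gt0.
have /andP [b1 b2] := ilog2_bounds hn.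
set t := ilog2 n in hD hH hLo b1 b2.
have ht : maxn T (e + 5) <= t.
  by rewrite -ltnS; apply: (@ltn_pexp2l 2) => //; apply: leq_ltn_trans hN b2.
move: ht; rewrite geq_max => /andP [hT he].
set K := D + 3 * t in hH hLo.
have Hn2 : n ^ 2 <= 2 ^ (t.+1 * 2).
  by rewrite expnM; apply: exp_mono_base; exact: ltnW.
have A : n ^ 2 * 2 ^ (e + D + 3) <= 2 ^ K.
  apply: leq_trans (_ : 2 ^ (t.+1 * 2) * 2 ^ (e + D + 3) <= _).
    by rewrite leq_mul2r Hn2 orbT.
  rewrite -expnD; apply: leq_pexp2l => //; rewrite /K; lia.
have B : n ^ 2 * n.+1 ^ K * 2 ^ (e + D + 4) <= 2 ^ n.
  have W : n.+1 ^ K <= 2 ^ (t.+1 * K) by rewrite expnM; exact: exp_mono_base.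
  apply: leq_trans (_ : 2 ^ (t.+1 * 2) * 2 ^ (t.+1 * K) * 2 ^ (e + D + 4) <= _).
    by rewrite leq_mul2r leq_mul ?orbT.
  rewrite -!expnD; apply: leq_pexp2l => //; apply: leq_trans b1.
  apply: leq_trans (HT t hT).
  have h1 : t.+1 * K <= (C0 + 3) * t.+1 ^ 2.
    rewrite /K expnS expn1 mulnA [_ * t.+1]mulnC leq_mul2l; apply/orP; right; lia.
  have h2 : D <= C0 * t.+1 ^ 2 by apply: leq_trans hD _; rewrite leq_mul2l expnS expn1 leq_pmulr ?orbT.
  have h3 : t.+1 * 2 + e + 4 <= (e + 6) * t.+1 ^ 2.
    rewrite expnS expn1; nia.
  lia.
set P := 2 ^ (e + D + 2).
have P3 : 2 ^ (e + D + 3) = 2 * P by rewrite /P addnS expnS.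
have P4 : 2 ^ (e + D + 4) = 4 * P by rewrite /P !addnS !expnS mulnA.
rewrite P3 in A; rewrite P4 in B.
have C1 : n ^ 2 * H * (2 * P) <= 2 ^ L.
  apply: leq_trans hH; rewrite mulnAC [H * _]mulnC leq_mul2r A orbT //.
have C2 : n ^ 2 * Lo * (2 * P) <= 2 ^ L.
  have S0 : 0 < 2 ^ n by exact: expn_gt0.
  rewrite -(leq_pmul2r S0).
  have m1 := leq_mul hLo (leqnn (n ^ 2 * (2 * P))).
  have m2 := leq_mul (leqnn (2 ^ L)) B.
  move: m1 m2; rewrite [2 ^ L.+1]expnS.
  set X := n ^ 2; set R := 2 ^ L; set S := 2 ^ n; set W := n.+1 ^ K.
  move=> m1 m2; lia.
rewrite mulnDr mulnDl; lia.
Qed.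

Local Open Scope R_scope.
Lemma ln2_pos : (0 < ln 2).
Proof. have := ln_lt_2; lra. Qed.

Lemma INR_pow2 t : INR (2 ^ t)%N = 2 ^ t.
Proof.
elim: t => [|t IH]; first by rewrite /=.
rewrite expnS mult_INR IH /=; lra.
Qed.

Lemma ln_le' x y : (0 < x) -> (x <= y) -> (ln x <= ln y).
Proof.
move=> hx hxy; case: (Rle_lt_or_eq_dec _ _ hxy) => h.
  by apply: Rlt_le; apply: ln_increasing.
by rewrite h; apply: Rle_refl.
Qed.

Lemma log2_lb (t n : nat) : (2 ^ t <= n)%N -> (INR t <= log2 (INR n)).
Proof.
move=> h.
have h2 : (0 < 2 ^ t) by apply: pow_lt; lra.
have hle : ((2 ^ t) <= INR n) by rewrite -INR_pow2; apply: le_INR; apply/leP.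
have := ln_le' h2 hle; rewrite ln_pow; last lra.
move=> H; rewrite /log2.
have l2 := ln2_pos.
have -> : INR t = (INR t * ln 2 / ln 2) by field; lra.
apply: Rmult_le_compat_r => //; apply: Rlt_le; apply: Rinv_0_lt_compat; lra.
Qed.

Lemma log2_ub (t n : nat) : (0 < n)%N -> (n < 2 ^ t.+1)%N -> (log2 (INR n) < INR t + 1).
Proof.
move=> hn h.
have hn' : (0 < INR n) by apply: lt_0_INR; apply/ltP.
have hlt : (INR n < (2 ^ t.+1)) by rewrite -INR_pow2; apply: lt_INR; apply/ltP.
have := ln_increasing _ _ hn' hlt; rewrite ln_pow; last lra.
move=> H; rewrite /log2.
have l2 := ln2_pos.
have -> : (INR t + 1 = INR t.+1 * ln 2 / ln 2) by rewrite S_INR; field; lra.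
apply: Rmult_lt_compat_r => //; apply: Rinv_0_lt_compat; lra.
Qed.

Lemma Int_part_nat (d : R) : (0 <= d) ->
  (INR (Z.to_nat (Int_part d)) <= d) /\ (d < INR (Z.to_nat (Int_part d)) + 1).
Proof.
move=> hd; have [h1 h2] := base_Int_part d.
have hz : (0 <= Int_part d)%Z.
  rewrite /Int_part; have [a1 _] := archimed d.
  have : (0 < up d)%Z by apply: lt_0_IZR; lra.
  lia.
rewrite INR_IZR_INZ Z2Nat.id //; lra.
Qed.

Local Close Scope R_scope.

Unset Implicit Arguments.

Theorem lemma3 (c : R) (hc : Rle 0 c) :
  exists N : nat, forall n : nat, (N <= n)%N ->
  forall G : rel 'I_n, is_graph G ->
  random G (Rmult c (log2 (INR n))) ->
  forall i j : 'I_n, j != i ->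
    G i j \/ exists h : 'I_n,
      small_nbr G (Rmult (Rplus c 3) (log2 (INR n))) i h /\ G h j.
Proof.
have [dc Hdc] := decoder_exists.
set C0 := Z.to_nat (up c).
have [N HN] := numeric (pickle dc) C0.
exists (maxn N 1) => n; rewrite geq_max => /andP [hN hn1] G HG Hrand i j hji.
case Gij: (G i j); first by left.
right; apply: NNPP => Hno.
set d := Rmult c (log2 (INR n)).
have /andP [b1 b2] := ilog2_bounds hn1.
set t := ilog2 n in b1 b2.
have hlt := log2_lb b1.
have hut := log2_ub hn1 b2.
have hl0 : Rle 0 (log2 (INR n)) := Rle_trans _ _ _ (pos_INR t) hlt.
have hd0 : Rle 0 d by apply: Rmult_le_pos.
have [hD1 hD2] := Int_part_nat hd0.
set D := Z.to_nat (Int_part d) in hD1 hD2.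
have hC0 : Rle c (INR C0).
  have [a1 _] := archimed c.
  have hz : (0 <= up c)%Z by apply: le_0_IZR; lra.
  rewrite /C0 INR_IZR_INZ Z2Nat.id //; lra.
have hDC : (D <= C0 * t.+1)%N.
  apply/leP; apply: INR_le; rewrite mult_INR S_INR.
  apply: Rle_trans hD1 _; rewrite /d.
  apply: Rle_trans (_ : Rle _ (Rmult c (INR t + 1))) _.
    apply: Rmult_le_compat_l => //; lra.
  apply: Rmult_le_compat_r => //; have := pos_INR t; lra.
set K := (D + 3 * t)%N.
have hK : Rle (INR K) (Rmult (Rplus c 3) (log2 (INR n))).
  rewrite /K plus_INR mult_INR /=; rewrite /d in hD1; lra.
have Hbad : forall h : 'I_n, G i h ->
    (#|[set h' | G i h' & (h' < h)%N]| < K)%N -> G h j = false.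
  move=> h Gih hk; apply/negbTE/negP => Ghj; apply: Hno; exists h; split => //.
  split => //; apply: Rlt_le_trans hK; apply: lt_INR; exact/ltP.
have hij : i != j by rewrite eq_sym.
have [q [HU Hq]] := core Hdc HG hij Gij Hbad.
have Hsz := Hrand _ HU.
have hnum := HN n D #|Hi i j K| #|Lo i K| (Lof n) hN hDC (card_Hi K hij) (card_Lo i K).
have Hsize : (size q + (pickle dc + D + 2) <= Lof n)%N.
  rewrite -(leq_exp2l _ _ (isT : 1 < 2)) expnD; apply: leq_trans hnum.
  by rewrite leq_mul2r Hq orbT.
rewrite size_cat size_nseq /= -Lof_eq in Hsz.
have Hs2 : (pickle dc + (size q).+1 + D.+1 <= Lof n)%N.
  move: Hsize; clearbody D; move=> H; lia.
have := le_INR _ _ (leP Hs2); rewrite !plus_INR !S_INR.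
move: Hsz; rewrite !plus_INR !S_INR; rewrite /d in hD2 *; lra.
Qed.
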